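(* The group \(\mathcal{G}=\langle x,y,t \mid x^7, y^2, (xy)^3, [x,y]^4, t^2, [t^{x^2},yx^{-1}], [t,y], (yt^{x^2})^5, (xyx^2t^x)^5, (xt)^8\rangle\) is perfect.
   Context: Conventions: \(a^g=g^{-1}ag\) and \([a,b]=a^{-1}b^{-1}ab\). A group is perfect if it equals its commutator subgroup. *)

(* Defs.v *)
(* The finitely presented group
   G = < x, y, t | relators > is modelled as words in the letters
   x^{+-1}, y^{+-1}, t^{+-1} modulo the congruence generated by free
   cancellation and insertion/deletion of relators (i.e. the free group
   modulo the normal closure of the relators). *)
From Stdlib Require Import List.
Import ListNotations.

Inductive gen : Type := GX | GY | GT.

(* a letter: generator with exponent sign; true = inverse *)
Definition letter : Type := (gen * bool)%type.
Definition word : Type := list letter.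

Definition inv_letter (l : letter) : letter := (fst l, negb (snd l)).
Definition winv (w : word) : word := rev (map inv_letter w).

Definition x : word := [(GX, false)].
Definition y : word := [(GY, false)].
Definition t : word := [(GT, false)].

Fixpoint wpow (w : word) (n : nat) : word :=
  match n with 0 => [] | S k => w ++ wpow w k end.

(* conventions: a^g = g^-1 a g,  [a,b] = a^-1 b^-1 a b *)
Definition wconj (a g : word) : word := winv g ++ a ++ g.
Definition wcomm (a b : word) : word := winv a ++ winv b ++ a ++ b.

Definition relators : list word :=
  [ wpow x 7;
    wpow y 2;
    wpow (x ++ y) 3;
    wpow (wcomm x y) 4;
    wpow t 2;
    wcomm (wconj t (wpow x 2)) (y ++ winv x);
    wcomm t y;
    wpow (y ++ wconj t (wpow x 2)) 5;
    wpow (x ++ y ++ wpow x 2 ++ wconj t x) 5;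
    wpow (x ++ t) 8 ].

Inductive geq : word -> word -> Prop :=
  | geq_refl w : geq w w
  | geq_sym u v : geq u v -> geq v u
  | geq_trans u v w : geq u v -> geq v w -> geq u w
  | geq_cancel u v l : geq (u ++ [l; inv_letter l] ++ v) (u ++ v)
  | geq_rel u v r : In r relators -> geq (u ++ r ++ v) (u ++ v).

Definition prod_comm (cs : list (word * word)) : word :=
  concat (map (fun p => wcomm (fst p) (snd p)) cs).

(* G is perfect: G = [G,G], i.e. every element of G lies in the subgroup
   generated by commutators; since [a,b]^-1 = [b,a], that subgroup consists
   exactly of finite products of commutators. *)
Definition perfect_G : Prop :=
  forall w : word, exists cs : list (word * word), geq w (prod_comm cs).

(* Main.v *)
Require Import Defs.
From Stdlib Require Import List ZArith Lia.
Import ListNotations.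

Lemma inv_inv l : inv_letter (inv_letter l) = l.
Proof. destruct l as [g b]; unfold inv_letter; simpl; rewrite Bool.negb_involutive; reflexivity. Qed.

Lemma winv_app a b : winv (a ++ b) = winv b ++ winv a.
Proof. unfold winv; rewrite map_app, rev_app_distr; reflexivity. Qed.

Lemma winv_winv a : winv (winv a) = a.
Proof.
  unfold winv; rewrite map_rev, rev_involutive, map_map.
  induction a; simpl; [reflexivity| rewrite inv_inv, IHa; reflexivity].
Qed.

Lemma geq_ctx a b u v : geq a b -> geq (u ++ a ++ v) (u ++ b ++ v).
Proof.
  intros H; revert u v; induction H; intros u' v'.
  - apply geq_refl.
  - apply geq_sym; auto.
  - eapply geq_trans; eauto.
  - replace (u' ++ (u ++ [l; inv_letter l] ++ v) ++ v') with
      ((u' ++ u) ++ [l; inv_letter l] ++ (v ++ v')) by (repeat rewrite <- app_assoc; reflexivity).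
    replace (u' ++ (u ++ v) ++ v') with ((u' ++ u) ++ (v ++ v')) by (repeat rewrite <- app_assoc; reflexivity).
    apply geq_cancel.
  - replace (u' ++ (u ++ r ++ v) ++ v') with
      ((u' ++ u) ++ r ++ (v ++ v')) by (repeat rewrite <- app_assoc; reflexivity).
    replace (u' ++ (u ++ v) ++ v') with ((u' ++ u) ++ (v ++ v')) by (repeat rewrite <- app_assoc; reflexivity).
    apply geq_rel; auto.
Qed.

Lemma geq_app a a' b b' : geq a a' -> geq b b' -> geq (a ++ b) (a' ++ b').
Proof.
  intros H1 H2. eapply geq_trans.
  - pose proof (geq_ctx a a' [] b H1) as H; simpl in H; exact H.
  - pose proof (geq_ctx b b' a' [] H2) as H; rewrite !app_nil_r in H; exact H.
Qed.

Lemma canc p s q : geq (p ++ s ++ winv s ++ q) (p ++ q).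
Proof.
  revert p q; induction s as [|l s IH]; intros p q.
  - apply geq_refl.
  - change (l :: s) with ([l] ++ s). rewrite winv_app.
    change (winv [l]) with [inv_letter l].
    eapply geq_trans.
    + replace (p ++ ([l] ++ s) ++ (winv s ++ [inv_letter l]) ++ q) with
        ((p ++ [l]) ++ s ++ winv s ++ ([inv_letter l] ++ q)) by (repeat rewrite <- app_assoc; reflexivity).
      apply IH.
    + replace ((p ++ [l]) ++ [inv_letter l] ++ q) with (p ++ [l; inv_letter l] ++ q)
        by (repeat rewrite <- app_assoc; reflexivity).
      apply geq_cancel.
Qed.

Lemma canc' p s q : geq (p ++ winv s ++ s ++ q) (p ++ q).
Proof. pose proof (canc p (winv s) q) as H; rewrite winv_winv in H; exact H. Qed.

Definition C (w : word) := exists cs, geq w (prod_comm cs).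

Lemma C_geq a b : geq a b -> C b -> C a.
Proof. intros H [cs Hc]; exists cs; eapply geq_trans; eauto. Qed.

Lemma C_app a b : C a -> C b -> C (a ++ b).
Proof.
  intros [c1 H1] [c2 H2]; exists (c1 ++ c2).
  unfold prod_comm; rewrite map_app, concat_app. apply geq_app; auto.
Qed.

Lemma C_conjcomm a b v : C (wconj (wcomm a b) v).
Proof.
  exists [(wconj a v, wconj b v)]. unfold prod_comm; simpl. rewrite app_nil_r.
  unfold wcomm, wconj. rewrite !winv_app, !winv_winv.
  apply geq_sym.
  repeat rewrite <- app_assoc.
  eapply geq_trans.
  { replace (winv v ++ winv a ++ v ++ winv v ++ winv b ++ v ++ winv v ++ a ++ v ++ winv v ++ b ++ v)
      with ((winv v ++ winv a) ++ v ++ winv v ++ (winv b ++ v ++ winv v ++ a ++ v ++ winv v ++ b ++ v))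
      by (repeat rewrite <- app_assoc; reflexivity).
    apply canc. }
  eapply geq_trans.
  { replace ((winv v ++ winv a) ++ winv b ++ v ++ winv v ++ a ++ v ++ winv v ++ b ++ v)
      with ((winv v ++ winv a ++ winv b) ++ v ++ winv v ++ (a ++ v ++ winv v ++ b ++ v))
      by (repeat rewrite <- app_assoc; reflexivity).
    apply canc. }
  eapply geq_trans.
  { replace ((winv v ++ winv a ++ winv b) ++ a ++ v ++ winv v ++ b ++ v)
      with ((winv v ++ winv a ++ winv b ++ a) ++ v ++ winv v ++ (b ++ v))
      by (repeat rewrite <- app_assoc; reflexivity).
    apply canc. }
  repeat rewrite <- app_assoc; apply geq_refl.
Qed.

Lemma C_swap u a b v : C (u ++ a ++ b ++ v) -> C (u ++ b ++ a ++ v).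
Proof.
  intros H.
  apply (C_geq _ ((u ++ a ++ b ++ v) ++ wconj (wcomm b a) v)).
  2: apply C_app; [exact H | apply C_conjcomm].
  unfold wconj, wcomm. apply geq_sym.
  eapply geq_trans.
  { replace ((u ++ a ++ b ++ v) ++ winv v ++ (winv b ++ winv a ++ b ++ a) ++ v)
      with ((u ++ a ++ b) ++ v ++ winv v ++ (winv b ++ winv a ++ b ++ a ++ v))
      by (repeat rewrite <- app_assoc; reflexivity).
    apply canc. }
  eapply geq_trans.
  { replace ((u ++ a ++ b) ++ winv b ++ winv a ++ b ++ a ++ v)
      with ((u ++ a) ++ b ++ winv b ++ (winv a ++ b ++ a ++ v))
      by (repeat rewrite <- app_assoc; reflexivity).
    apply canc. }
  eapply geq_trans.
  { replace ((u ++ a) ++ winv a ++ b ++ a ++ v)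
      with (u ++ a ++ winv a ++ (b ++ a ++ v))
      by (repeat rewrite <- app_assoc; reflexivity).
    apply canc. }
  apply geq_refl.
Qed.

Definition geqb (g h : gen) : bool :=
  match g, h with GX, GX | GY, GY | GT, GT => true | _, _ => false end.

Fixpoint es (g : gen) (w : word) : Z :=
  match w with
  | [] => 0%Z
  | (h, b) :: w' => ((if geqb g h then (if b then (-1) else 1) else 0) + es g w')%Z
  end.

Lemma es_app g a b : es g (a ++ b) = (es g a + es g b)%Z.
Proof. induction a as [|[h c] a IH]; simpl; [reflexivity| rewrite IH; lia]. Qed.

Lemma geqb_refl g : geqb g g = true. Proof. destruct g; reflexivity. Qed.

Lemma es_noneg g w : ~ In (g, true) w -> (0 <= es g w)%Z.
Proof.
  induction w as [|[h c] w IH]; simpl; intros Hn; [lia|].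
  assert (0 <= es g w)%Z by (apply IH; tauto).
  destruct g, h, c; cbn [geqb] in *; try lia; exfalso; apply Hn; left; reflexivity.
Qed.

Lemma es_nopos g w : ~ In (g, false) w -> (es g w <= 0)%Z.
Proof.
  induction w as [|[h c] w IH]; simpl; intros Hn; [lia|].
  assert (es g w <= 0)%Z by (apply IH; tauto).
  destruct g, h, c; cbn [geqb] in *; try lia; exfalso; apply Hn; left; reflexivity.
Qed.

Lemma letter_dec (a b : letter) : {a = b} + {a <> b}.
Proof. decide equality; [apply Bool.bool_dec | decide equality]. Defined.

Lemma ZS n : forall w, length w <= n -> (forall g, es g w = 0%Z) -> C w.
Proof.
  induction n as [|n IH]; intros w Hl Hz.
  - destruct w; [exists []; apply geq_refl | simpl in Hl; lia].
  - destruct w as [|[g b] w'].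
    + exists []; apply geq_refl.
    + assert (Hin : In (inv_letter (g, b)) w').
      { unfold inv_letter; simpl. destruct (in_dec letter_dec (g, negb b) w') as [i|ni]; auto.
        exfalso. specialize (Hz g). simpl in Hz. rewrite geqb_refl in Hz.
        destruct b; simpl in ni.
        - apply es_nopos in ni; lia.
        - apply es_noneg in ni; lia. }
      apply in_split in Hin. destruct Hin as [p [q Hpq]]. subst w'.
      assert (Cpq : C (p ++ q)).
      { apply IH.
        - simpl in Hl; rewrite length_app in *; simpl in Hl; lia.
        - intros h. specialize (Hz h). cbn [es] in Hz. rewrite es_app in Hz |- *. cbn [es inv_letter fst snd] in Hz.
          destruct h, g, b; cbn [geqb negb] in *; lia. }
      assert (C ([(g, b)] ++ [inv_letter (g, b)] ++ p ++ q)).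
      { eapply C_geq; [| exact Cpq].
        apply (geq_cancel [] (p ++ q) (g, b)). }
      apply C_swap in H. simpl in H. exact H.
Qed.

Lemma Zinv r : geq r [] -> geq (winv r) [].
Proof.
  intros H. eapply geq_trans.
  - pose proof (geq_ctx [] r (winv r) [] (geq_sym _ _ H)) as H'.
    rewrite !app_nil_r in H'; simpl in H'. exact H'.
  - pose proof (canc' [] r []) as H'; rewrite !app_nil_r in H'; exact H'.
Qed.

Lemma Zrel i : i < 10 -> geq (nth i relators []) [].
Proof.
  intros Hi. pose proof (geq_rel [] [] (nth i relators [])) as H.
  rewrite app_nil_r in H; apply H. apply nth_In. simpl; exact Hi.
Qed.

Definition corr (L : list (bool * nat)) : word :=
  concat (map (fun p : bool * nat => if fst p then winv (nth (snd p) relators []) else nth (snd p) relators []) L).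

Lemma corr_Z L : forallb (fun p : bool * nat => Nat.ltb (snd p) 10) L = true -> geq (corr L) [].
Proof.
  induction L as [|[b i] L IH]; simpl; intros H; [apply geq_refl|].
  apply andb_prop in H; destruct H as [H1 H2]. apply PeanoNat.Nat.ltb_lt in H1.
  change ([] : word) with (([] : word) ++ []). apply geq_app; [|auto].
  destruct b; [apply Zinv|]; apply Zrel; auto.
Qed.

Lemma C_letter_via l L : forallb (fun p : bool * nat => Nat.ltb (snd p) 10) L = true ->
  (forall g, es g ([l] ++ corr L) = 0%Z) -> C [l].
Proof.
  intros H1 H2. apply (C_geq _ ([l] ++ corr L)).
  - pose proof (geq_app [l] [l] _ _ (geq_refl [l]) (geq_sym _ _ (corr_Z L H1))) as H.
    rewrite app_nil_r in H; exact H.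
  - eapply ZS; [apply le_n | exact H2].
Qed.

Lemma C_letter l : C [l].
Proof.
  destruct l as [g b]; destruct g, b.
  - apply (C_letter_via _ [(false,8);(true,7);(true,0);(true,0)]); [reflexivity| intros []; vm_compute; reflexivity].
  - apply (C_letter_via _ [(true,8);(false,7);(false,0);(false,0)]); [reflexivity| intros []; vm_compute; reflexivity].
  - apply (C_letter_via _ [(false,2);(true,1);(true,8);(true,8);(true,8);(false,7);(false,7);(false,7);(false,0);(false,0);(false,0);(false,0);(false,0);(false,0)]); [reflexivity| intros []; vm_compute; reflexivity].
  - apply (C_letter_via _ [(true,2);(false,1);(false,8);(false,8);(false,8);(true,7);(true,7);(true,7);(true,0);(true,0);(true,0);(true,0);(true,0);(true,0)]); [reflexivity| intros []; vm_compute; reflexivity].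
  - apply (C_letter_via _ [(true,7);(true,7);(true,1);(true,4);(true,4);(true,2);(false,8);(false,8);(false,8);(true,0);(true,0);(true,0);(true,0);(true,0);(true,0)]); [reflexivity| intros []; vm_compute; reflexivity].
  - apply (C_letter_via _ [(false,7);(false,7);(false,1);(false,4);(false,4);(false,2);(true,8);(true,8);(true,8);(false,0);(false,0);(false,0);(false,0);(false,0);(false,0)]); [reflexivity| intros []; vm_compute; reflexivity].
Qed.

Theorem lemma5p2 : perfect_G.
Proof.
  intros w. induction w as [|l w IH].
  - exists []; apply geq_refl.
  - change (l :: w) with ([l] ++ w). apply C_app; [apply C_letter | exact IH].
Qed.
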